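(* Let $K$ be an infinite commutative domain and $R$ an associative $K$-algebra on which $K$ acts torsion-freely. (i) If a semigroup $S$ satisfies an identity in variables $x,y,x_3,\dots$ which is left reduced (respectively right reduced, reduced), then $S$ satisfies an identity of the same type involving only the variables $x$ and $y$. (ii) If $R$ satisfies a binomial identity then either $R$ is bounded nil or $(R,\cdot)$ satisfies a semigroup identity. (iii) If $R$ satisfies a binomial identity which is left reduced (respectively right reduced, reduced) then $R$ satisfies a partial linear identity of the same type. (iv) If $y^n=0$ for all $y\in R$ then $e_{2n-1}=0$ for all $x,y\in R$.
   Context: A semigroup identity is $u=v$ with $u\ne v$ words in the free semigroup on $\{x,y,x_3,\dots\}$; it is left reduced if the first letters of $u,v$ differ, right reduced if the last letters differ, reduced if both. A binomial identity is a nontrivial polynomial identity $\alpha_1u_1+\alpha_2u_2=0$ ($u_1,u_2$ monomials, $\alpha_i\in K$), with left/right reduced defined via $u_1,u_2$ in the same way. $R$ is bounded nil if there is $n$ with $r^n=0$ for all $r\in R$. A partial linear identity is a nontrivial identity $\sum_{i=0}^n\alpha_iy^ixy^{n-i}=0$ ($\alpha_i\in K$); it is left reduced if $\alpha_0\ne0$, right reduced if $\alpha_n\neq0$, reduced if both. $e_1=[x,y]=xy-yx$, $e_{m+1}=[e_m,y]$. *)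

(* Defs.v *)
From HB Require Import structures.
From mathcomp Require Import all_boot all_order all_algebra.
Set Implicit Arguments. Unset Strict Implicit. Unset Printing Implicit Defensive.
Import GRing.Theory.
Local Open Scope ring_scope.

(* Variables x, y, x_3, x_4, ... are encoded as natural numbers 0, 1, 2, 3, ...
   A word of the free semigroup is a NONEMPTY sequence of variable indices. *)
Definition word := seq nat.

Definition weval (S : Type) (op : S -> S -> S) (f : nat -> S) (w : word) : S :=
  foldl (fun acc i => op acc (f i)) (f (head 0%N w)) (behead w).

Inductive rtype := LeftRed | RightRed | FullRed.

Definition first_letters_differ (u v : word) : bool := head 0%N u != head 0%N v.
Definition last_letters_differ (u v : word) : bool := last 0%N u != last 0%N v.

Definition of_rtype (t : rtype) (u v : word) : bool :=
  match t with
  | LeftRed => first_letters_differ u v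
  | RightRed => last_letters_differ u v
  | FullRed => first_letters_differ u v && last_letters_differ u v
  end.

Definition sg_identity (S : Type) (op : S -> S -> S) (u v : word) : Prop :=
  [/\ (0 < size u)%N, (0 < size v)%N, u != v &
      forall f : nat -> S, weval op f u = weval op f v].

Definition is_assoc_algebra (K : pzRingType) (R : lmodType K)
  (mul : R -> R -> R) : Prop :=
  [/\ associative mul,
      forall x y z, mul (x + y) z = mul x z + mul y z,
      forall x y z, mul x (y + z) = mul x y + mul x z,
      forall (a : K) x y, mul (a *: x) y = a *: mul x y &
      forall (a : K) x y, mul x (a *: y) = a *: mul x y].

Definition torsion_free (K : pzRingType) (R : lmodType K) : Prop :=
  forall (a : K) (r : R), a *: r = 0 -> a = 0 \/ r = 0.

Definition infinite_type (T : eqType) : Prop :=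
  ~ exists s : seq T, forall x : T, x \in s.

(* Binomial identity a1 u1 + a2 u2 = 0, nontrivial meaning the noncommutative
   polynomial a1 u1 + a2 u2 is nonzero. *)
Definition binomial_identity (K : pzRingType) (R : lmodType K)
  (mul : R -> R -> R) (a1 a2 : K) (u1 u2 : word) : Prop :=
  [/\ (0 < size u1)%N, (0 < size u2)%N,
      (if u1 == u2 then a1 + a2 != 0 else (a1 != 0) || (a2 != 0)) &
      forall f : nat -> R, a1 *: weval mul f u1 + a2 *: weval mul f u2 = 0].

(* r ^ n for n >= 1 (for n = 0 it returns r; only used with 0 < n). *)
Definition npow (R : Type) (mul : R -> R -> R) (r : R) (n : nat) : R :=
  iter n.-1 (mul r) r.

Definition bounded_nil (R : zmodType) (mul : R -> R -> R) : Prop :=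
  exists n : nat, (0 < n)%N /\ forall r : R, npow mul r n = 0.

(* The monomial y^i x y^(n-i) (x = variable 0, y = variable 1). *)
Definition plin_word (n i : nat) : word := nseq i 1%N ++ 0%N :: nseq (n - i) 1%N.

Definition partial_linear_identity (K : pzRingType) (R : lmodType K)
  (mul : R -> R -> R) (n : nat) (al : nat -> K) : Prop :=
  (exists2 i, (i <= n)%N & al i != 0) /\
  forall x y : R,
    \sum_(i < n.+1) al i *: weval mul (fun k => if k == 0%N then x else y)
                                     (plin_word n i) = 0.

Definition plin_of_rtype (K : pzRingType) (t : rtype) (n : nat) (al : nat -> K) : bool :=
  match t with
  | LeftRed => al 0%N != 0
  | RightRed => al n != 0
  | FullRed => (al 0%N != 0) && (al n != 0)
  end.

(* e_1 = [x,y], e_(m+1) = [e_m, y]; ecomm mul m x y = e_m for m >= 1. *)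
Definition ecomm (R : zmodType) (mul : R -> R -> R) (m : nat) (x y : R) : R :=
  iter m.-1 (fun z => mul z y - mul y z) (mul x y - mul y x).

(* Main.v *)
Require Import Defs.
From HB Require Import structures.
From mathcomp Require Import all_boot all_order all_algebra.
From mathcomp Require Import zify.
From Stdlib Require Import Classical.
Import GRing.Theory.
Local Open Scope ring_scope.


Lemma weval_rcons (S : Type) (op : S -> S -> S) f (w : word) a :
  (0 < size w)%N -> weval op f (rcons w a) = op (weval op f w) (f a).
Proof. by case: w => // b s _; rewrite /weval rcons_cons /= foldl_rcons. Qed.

Lemma weval_map (S : Type) (op : S -> S -> S) f g (w : word) :
  (0 < size w)%N -> weval op f (map g w) = weval op (f \o g) w.
Proof.
case: w => // b s _; rewrite /weval /=.
by elim: s (f (g b)) => //= c s IH z; rewrite IH.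
Qed.

Lemma head_map0 (g : nat -> nat) (w : word) : (0 < size w)%N ->
  head 0%N (map g w) = g (head 0%N w).
Proof. by case: w. Qed.

Lemma last_map0 (g : nat -> nat) (w : word) : (0 < size w)%N ->
  last 0%N (map g w) = g (last 0%N w).
Proof. by case: w => // b s _ /=; rewrite last_map. Qed.

Lemma part_i_gen (S : Type) (op : S -> S -> S) (t : rtype) (u v : word)
  (gb : nat -> bool) :
  sg_identity op u v ->
  of_rtype t (map (fun z => nat_of_bool (gb z)) u) (map (fun z => nat_of_bool (gb z)) v) ->
  exists u v : word, [/\ sg_identity op u v, of_rtype t u v &
                         all (fun i => (i < 2)%N) (u ++ v)].
Proof.
set g := (fun z => nat_of_bool (gb z)).
case=> su sv _ Hid Ht; exists (map g u), (map g v); split => //.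
- split; rewrite ?size_map //.
  + apply/negP => /eqP E; move: Ht; rewrite E.
    by case: t => /=; rewrite /first_letters_differ /last_letters_differ
       ?eqxx ?andbF.
  + by move=> f; rewrite !weval_map.
- by apply/allP => i; rewrite mem_cat => /orP [] /mapP [z _ ->];
     rewrite /g; case: (gb z).
Qed.

Lemma part_i (S : Type) (op : S -> S -> S) (t : rtype) :
  (exists u v : word, sg_identity op u v /\ of_rtype t u v) ->
  exists u v : word, [/\ sg_identity op u v, of_rtype t u v &
                         all (fun i => (i < 2)%N) (u ++ v)].
Proof.
move=> [u [v [Hid Ht]]].
have [su sv _ _] := Hid.
set a := head 0%N u; set b := head 0%N v; set c := last 0%N u; set d := last 0%N v.
case: t Ht => /= Ht.
- apply: (@part_i_gen _ _ LeftRed u v (fun z => z != a)) => //=.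
  rewrite /first_letters_differ !head_map0 // -/a -/b eqxx.
  by move: Ht; rewrite /first_letters_differ -/a -/b eq_sym => ->.
- apply: (@part_i_gen _ _ RightRed u v (fun z => z != c)) => //=.
  rewrite /last_letters_differ !last_map0 // -/c -/d eqxx.
  by move: Ht; rewrite /last_letters_differ -/c -/d eq_sym => ->.
- move: Ht; rewrite /first_letters_differ /last_letters_differ -/a -/b -/c -/d.
  move=> /andP [ab cd].
  pose gb := fun z => if z == a then false else if z == b then true
                      else if z == c then (d == a) else (c != b).
  apply: (@part_i_gen _ _ FullRed u v gb) => //=.
  rewrite /first_letters_differ /last_letters_differ !head_map0 // !last_map0 //.
  rewrite -/a -/b -/c -/d.
  clearbody a b c d.
  have -> : gb a = false by rewrite /gb eqxx.
  have -> : gb b = true by rewrite /gb eq_sym (negbTE ab) eqxx.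
  rewrite /= /gb eqxx [d == c]eq_sym (negbTE cd).
  case E1: (c == a); case E2: (c == b); case E3: (d == a); case E4: (d == b) => //=;
  move: E1 E2 E3 E4 ab cd => /eqP E1 /eqP E2 /eqP E3 /eqP E4 ab cd; subst;
  by rewrite ?eqxx in ab cd *.
Qed.

Section Main.
Variables (K : idomainType) (R : lmodType K) (mul : R -> R -> R).
Hypothesis R_alg : is_assoc_algebra mul.
Hypothesis K_inf : infinite_type K.
Hypothesis R_tf : torsion_free R.



Lemma mA : associative mul. Proof. by case: R_alg. Qed.
Lemma mDl x y z : mul (x + y) z = mul x z + mul y z. Proof. by case: R_alg. Qed.
Lemma mDr x y z : mul x (y + z) = mul x y + mul x z. Proof. by case: R_alg. Qed.
Lemma mZl (a : K) x y : mul (a *: x) y = a *: mul x y. Proof. by case: R_alg. Qed.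
Lemma mZr (a : K) x y : mul x (a *: y) = a *: mul x y. Proof. by case: R_alg. Qed.
Lemma m0l z : mul 0 z = 0.
Proof. by rewrite -(scale0r (0 : R)) mZl !scale0r. Qed.
Lemma m0r z : mul z 0 = 0.
Proof. by rewrite -(scale0r (0 : R)) mZr !scale0r. Qed.
Lemma mNl x y : mul (- x) y = - mul x y.
Proof. by rewrite -scaleN1r mZl scaleN1r. Qed.
Lemma mNr x y : mul x (- y) = - mul x y.
Proof. by rewrite -scaleN1r mZr scaleN1r. Qed.
Lemma mBl x y z : mul (x - y) z = mul x z - mul y z.
Proof. by rewrite mDl mNl. Qed.
Lemma mBr x y z : mul x (y - z) = mul x y - mul x z.
Proof. by rewrite mDr mNr. Qed.

Lemma pow_comm r k : mul r (iter k (fun z => mul z r) r) = mul (iter k (fun z => mul z r) r) r.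
Proof. by elim: k => //= k IH; rewrite mA IH. Qed.

Lemma npowE r k : iter k (mul r) r = iter k (fun z => mul z r) r.
Proof. by elim: k => //= k IH; rewrite IH pow_comm. Qed.

Lemma iterRt r k z : iter k.+1 (fun w => mul w r) z = mul z (iter k (fun w => mul w r) r).
Proof. by elim: k => //= k IH; rewrite IH -mA. Qed.

Lemma iterL r k z : iter k.+1 (mul r) z = mul (iter k (mul r) r) z.
Proof. by elim: k => //= k IH; rewrite IH mA. Qed.

Lemma part_iv n : (0 < n)%N -> (forall y : R, npow mul y n = 0) ->
     forall x y : R, ecomm mul (2 * n - 1) x y = 0.
Proof.
move=> n0 nil x y.
pose Rt := fun w => mul w y. pose L := mul y. pose D := fun w => Rt w - L w.
have iter0 : forall f k, (forall w, f w = 0 -> True) -> True by [].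
have Rt0 : forall k, iter k Rt 0 = 0 by elim=> //= k ->; rewrite /Rt m0l.
have L0 : forall k, iter k L 0 = 0 by elim=> //= k ->; rewrite /L m0r.
have Rtn : forall i z, (n <= i)%N -> iter i Rt z = 0.
  move=> i z ni; rewrite -(subnK ni) iterD.
  suff -> : iter n Rt z = 0 by rewrite Rt0.
  move: (nil y); rewrite /npow -(prednK n0) iterRt npowE => ->; by rewrite m0r.
have Ln : forall j z, (n <= j)%N -> iter j L z = 0.
  move=> j z nj; rewrite -(subnK nj) iterD.
  suff -> : iter n L z = 0 by rewrite L0.
  move: (nil y); rewrite /npow -(prednK n0) iterL => ->; by rewrite m0l.
have LRt : forall i w, L (iter i Rt w) = iter i Rt (L w).
  by elim=> //= i IH w; rewrite -IH /L /Rt mA.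
have DB : forall k a b, iter k D (a - b) = iter k D a - iter k D b.
  elim=> //= k IH a b; rewrite IH /D /Rt /L mBl mBr.
  by rewrite !opprD addrACA.
have key : forall k i j z, (2 * n - 1 <= i + j + k)%N ->
    iter k D (iter i Rt (iter j L z)) = 0.
  elim=> [|k IH] i j z H.
    case: (leqP n i) => ni; first by rewrite Rtn.
    by rewrite Ln ?Rt0 //; move: H; rewrite addn0; lia.
  rewrite iterSr /D LRt -/(iter i.+1 Rt _) -/(iter j.+1 L _) DB.
  by rewrite !IH ?subrr //; move: H; lia.
rewrite /ecomm.
have -> : mul x y - mul y x = D x by [].
rewrite -iterSr prednK; last by lia.
by have := key (2 * n - 1)%N 0%N 0%N x; apply; lia.
Qed.




Lemma uniq_seq m : exists s : seq K, uniq s /\ size s = m.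
Proof.
elim: m => [|m [s [us ss]]]; first by exists [::].
have [x xs] : exists x, ~ (x \in s).
  by apply: not_all_ex_not => H; apply: K_inf; exists s.
exists (x :: s); split; last by rewrite /= ss.
by rewrite /= us andbT; apply/negP.
Qed.

Lemma poly_zero m (V : nat -> R) :
  (forall l : K, \sum_(k < m) l ^+ k *: V k = 0) -> forall k, (k < m)%N -> V k = 0.
Proof.
move=> H k0 hk0.
have [s [us ss]] := uniq_seq m.
pose a : 'rV[K]_m := \row_(j < m) s`_j.
pose M := Vandermonde m a.
have Hj : forall j : 'I_m, \sum_(k < m) M k j *: V k = 0.
  move=> j; rewrite -[RHS](H (s`_j)); apply: eq_bigr => k _.
  by rewrite /M /Vandermonde !mxE.
have dM : \det M != 0.
  rewrite det_Vandermonde; apply/prodf_neq0 => i _; apply/prodf_neq0 => j ij.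
  rewrite !mxE subr_eq0 nth_uniq ?ss //.
  by apply/eqP => E; move: ij; rewrite E ltnn.
pose l := Ordinal hk0.
have : \det M *: V l = 0.
  transitivity (\sum_(k < m) (M *m \adj M) k l *: V k).
    rewrite mul_mx_adj (bigD1 l) //= big1 ?addr0; first by rewrite mxE eqxx mulr1n.
    by move=> k kl; rewrite mxE (negbTE kl) mulr0n scale0r.
  under eq_bigr do rewrite mxE scaler_suml.
  rewrite exchange_big /= big1 // => j _.
  under eq_bigr do rewrite mulrC -scalerA.
  by rewrite -scaler_sumr Hj scaler0.
by case/R_tf => // /eqP; rewrite (negbTE dM).
Qed.

Lemma sum_single (m c : nat) (l : K) (X : R) : (c < m)%N ->
  \sum_(k < m) l ^+ k *: (if (k == c :> nat) then X else 0) = l ^+ c *: X.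
Proof.
move=> hc; rewrite (bigD1 (Ordinal hc)) //= eqxx big1 ?addr0 // => k.
by rewrite -val_eqE /= => /negbTE ->; rewrite scaler0.
Qed.

Lemma weval_scale (f : nat -> R) (i : nat) (l : K) (w : word) : (0 < size w)%N ->
  weval mul (fun k => if k == i then l *: f k else f k) w
  = l ^+ count_mem i w *: weval mul f w.
Proof.
elim/last_ind: w => [//|s c IH] _.
case: s IH => [|b s] IH.
  by rewrite /weval /= addn0; case: (c =P i) => [->|/eqP ci];
    rewrite ?eqxx ?expr1 ?expr0 ?scale1r //= eq_sym (negbTE ci) expr0 scale1r.
rewrite !weval_rcons // IH // -cats1 count_cat /= addn0.
case: (c =P i) => [->|/eqP ci]; rewrite ?eqxx ?(negbTE ci) /=.
  by rewrite addn1 exprSr mZl mZr scalerA mulrC.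
by rewrite addn0 mZl.
Qed.

Lemma weval_const (r : R) (w : word) : (0 < size w)%N ->
  weval mul (fun _ => r) w = npow mul r (size w).
Proof.
elim/last_ind: w => [//|s c IH] _.
case: s IH => [|b s] IH; first by [].
by rewrite weval_rcons // IH // size_rcons /npow /= npowE pow_comm.
Qed.

Lemma zero_word (a1 a2 : K) (u1 u2 : word) :
  (a1 != 0) || (a2 != 0) -> (0 < size u1)%N -> (0 < size u2)%N ->
  (forall f : nat -> R, a1 *: weval mul f u1 + a2 *: weval mul f u2 = 0) ->
  ~~ perm_eq u1 u2 ->
  exists u : word, (0 < size u)%N /\ forall f, weval mul f u = 0.
Proof.
move=> a12 s1 s2 Hid; rewrite /perm_eq => /allPn [i _ /= hi].
set c1 := count_mem i u1 in hi; set c2 := count_mem i u2 in hi.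
have key : forall f, a1 *: weval mul f u1 = 0.
  move=> f.
  pose V k := (if k == c1 then a1 *: weval mul f u1 else 0)
            + (if k == c2 then a2 *: weval mul f u2 else 0).
  have := @poly_zero (maxn c1 c2).+1 V _ c1.
  rewrite /V eqxx (negbTE hi) addr0; apply; last by lia.
  move=> l; under eq_bigr do rewrite scalerDr.
  rewrite big_split /= !sum_single; try lia.
  have := Hid (fun k => if k == i then l *: f k else f k).
  by rewrite !weval_scale // !scalerA ![a1 * _]mulrC ![a2 * _]mulrC.
case/orP: a12 => [a1n|a2n].
  exists u1; split => // f; by case: (R_tf _ _ (key f)) => //; move/eqP: a1n.
case: (a1 =P 0) => [a10|/eqP a1n].
  exists u2; split => // f; move: (Hid f); rewrite a10 scale0r add0r.
  by case/R_tf => //; move/eqP: a2n.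
exists u1; split => // f; by case: (R_tf _ _ (key f)) => //; move/eqP: a1n.
Qed.

Lemma sg_of_zero (u : word) : (0 < size u)%N -> (forall f, weval mul f u = 0) ->
  exists u v : word, sg_identity mul u v.
Proof.
move=> su H; exists u, (rcons u 0%N); split => //; first by rewrite size_rcons.
  by apply/eqP => /(congr1 size); rewrite size_rcons; lia.
by move=> f; rewrite weval_rcons // H m0l.
Qed.

Lemma part_ii :
  (exists (a1 a2 : K) (u1 u2 : word), binomial_identity mul a1 a2 u1 u2) ->
     bounded_nil mul \/ exists u v : word, sg_identity mul u v.
Proof.
move=> [a1 [a2 [u1 [u2 [s1 s2 cond Hid]]]]].
case Hp: (perm_eq u1 u2); last first.
  have cond' : (a1 != 0) || (a2 != 0).
    by move: cond; case: eqP => // E; subst; rewrite perm_refl in Hp.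
  right; have [u [su H]] := zero_word _ _ _ _ cond' s1 s2 Hid (negbT Hp).
  exact: (sg_of_zero _ su H).
have sz : size u1 = size u2 := perm_size Hp.
case: (a1 + a2 =P 0) => [a0|/eqP a0].
  have ne : u1 != u2 by apply/eqP => E; move: cond; rewrite E eqxx a0 eqxx.
  move: cond; rewrite (negbTE ne) => cond.
  have a2E : a2 = - a1 by apply/eqP; rewrite -addr_eq0 addrC a0.
  have a1n : a1 != 0 by move: cond; rewrite a2E oppr_eq0 orbb.
  right; exists u1, u2; split => // f.
  move: (Hid f); rewrite a2E scaleNr -scalerBr => /R_tf [/eqP|/eqP]; 
    first by rewrite (negbTE a1n).
  by rewrite subr_eq0 => /eqP.
left; exists (size u1); split => // r.
move: (Hid (fun _ => r)); rewrite !weval_const // -sz -scalerDl.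
by case/R_tf => // /eqP; rewrite (negbTE a0).
Qed.

Lemma mul_suml (I : Type) (r : seq I) (P : pred I) (F : I -> R) (z : R) :
  mul (\sum_(i <- r | P i) F i) z = \sum_(i <- r | P i) mul (F i) z.
Proof. by apply: (big_morph (fun v => mul v z)) => [a b|]; rewrite ?mDl ?m0l. Qed.

Lemma nseqSr k (c : nat) : nseq k.+1 c = rcons (nseq k c) c.
Proof. by elim: k => //= k ->. Qed.

Lemma map_constw (s : word) (d : nat) : map (fun _ => d) s = nseq (size s) d.
Proof. by elim: s => //= b s ->. Qed.

Lemma plin_rcons n i : (i <= n)%N -> plin_word n.+1 i = rcons (plin_word n i) 1%N.
Proof. by move=> hi; rewrite /plin_word subSn // nseqSr rcons_cat rcons_cons. Qed.

Lemma plin_last n : plin_word n n = rcons (nseq n 1%N) 0%N.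
Proof. by rewrite /plin_word subnn cats1. Qed.

Lemma size_plin n i : (0 < size (plin_word n i))%N.
Proof. by rewrite /plin_word size_cat /=; lia. Qed.

Section Lin.
Variables (x y : R) (A : nat -> bool).

Definition fl (l : K) : nat -> R := fun k => if A k then y + l *: x else y.
Definition cstep (c : nat -> R) (a : nat) : nat -> R :=
  fun k => mul (c k) y + (if A a then (if k is k'.+1 then mul (c k') x else 0) else 0).
Definition cinit (a : nat) : nat -> R :=
  fun k => match k with 0 => y | 1 => if A a then x else 0 | _ => 0 end.
Definition cf (w : word) := foldl cstep (cinit (head 0%N w)) (behead w).
Definition gxy : nat -> R := fun k => if k == 0%N then x else y.

Lemma cf_rcons w a : (0 < size w)%N -> cf (rcons w a) = cstep (cf w) a.
Proof. by case: w => // b s _; rewrite /cf rcons_cons /= foldl_rcons. Qed.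

Lemma cf_supp w k : (0 < size w)%N -> (size w < k)%N -> cf w k = 0.
Proof.
elim/last_ind: w k => [//|s c IH] k _ hk.
case: s IH hk => [|b s] IH hk.
  by case: k hk => [|[|k]].
rewrite cf_rcons // /cstep IH //; last by move: hk; rewrite size_rcons; lia.
rewrite m0l add0r; case: (A c) => //; case: k hk => [//|k] hk.
by rewrite IH ?m0l //; move: hk; rewrite size_rcons; lia.
Qed.

Lemma expand w N l : (0 < size w)%N -> (size w < N)%N ->
  weval mul (fl l) w = \sum_(k < N) l ^+ k *: cf w k.
Proof.
elim/last_ind: w N => [//|s c IH] N _ hN.
case: s IH hN => [|b s] IH hN.
  case: N hN => [|[|N]] // _.
  rewrite 2!big_ord_recl big1 => [|i _]; last by rewrite !lift0 /= scaler0.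
  rewrite !lift0 /cf /weval /= /fl expr0 scale1r expr1 addr0.
  by case: (A c); rewrite ?scaler0 ?addr0.
move: hN; rewrite size_rcons => hN.
rewrite weval_rcons // (IH N) //; last by lia.
rewrite cf_rcons // /cstep /fl mul_suml.
under [RHS]eq_bigr do rewrite scalerDr.
rewrite big_split /=.
under eq_bigr do rewrite mZl.
case: (A c); last first.
  by rewrite [X in _ = _ + X]big1 ?addr0 // => i _; rewrite scaler0.
under eq_bigr do rewrite mDr mZr scalerDr.
rewrite big_split /=; congr (_ + _).
case: N hN IH => [//|N] hN IH.
rewrite [RHS]big_ord_recl scaler0 add0r.
under [RHS]eq_bigr do rewrite lift0 /=.
rewrite [LHS]big_ord_recr /= (cf_supp (b :: s)) //.
rewrite m0l !scaler0 addr0; apply: eq_bigr => i _.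
by rewrite !scalerA exprS mulrC.
Qed.

Lemma cf0 w : (0 < size w)%N -> cf w 0 = weval mul (fun _ => y) w.
Proof.
elim/last_ind: w => [//|s c IH] _.
case: s IH => [|b s] IH; first by [].
by rewrite cf_rcons // weval_rcons // /cstep IH // if_same addr0.
Qed.

Lemma cf1 w : (0 < size w)%N -> cf w 1 = \sum_(i < size w)
   (if A (nth 0%N w i) then weval mul gxy (plin_word (size w).-1 i) else 0).
Proof.
elim/last_ind: w => [//|s c IH] _.
case: s IH => [|b s] IH.
  by rewrite /= big_ord1 /=.
set w' := b :: s.
rewrite cf_rcons // /cstep size_rcons big_ord_recr /= nth_rcons ltnn eqxx.
rewrite plin_last weval_rcons; last by rewrite size_nseq.
rewrite cf0 // -(map_constw w') weval_map //.
congr (_ + _).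
rewrite IH // mul_suml; apply: eq_bigr => i _.
rewrite -rcons_cons nth_rcons ltn_ord.
case: (A _); last by rewrite m0l.
rewrite plin_rcons; last by have := ltn_ord i; rewrite /w' /=; lia.
by rewrite weval_rcons // size_plin.
Qed.
End Lin.

Lemma lin (c1 c2 : K) (w1 w2 : word) (n : nat) (A : nat -> bool) :
  size w1 = n.+1 -> size w2 = n.+1 ->
  (forall f, c1 *: weval mul f w1 + c2 *: weval mul f w2 = 0) ->
  forall x y : R, \sum_(i < n.+1) (c1 * (A (nth 0%N w1 i))%:R + c2 * (A (nth 0%N w2 i))%:R)
     *: weval mul (fun k => if k == 0%N then x else y) (plin_word n i) = 0.
Proof.
move=> h1 h2 Hid x y.
pose V k := c1 *: cf x y A w1 k + c2 *: cf x y A w2 k.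
have p1 : (0 < size w1)%N by rewrite h1.
have p2 : (0 < size w2)%N by rewrite h2.
have HV : forall l : K, \sum_(k < n.+2) l ^+ k *: V k = 0.
  move=> l; under eq_bigr do rewrite scalerDr !scalerA ![_ * c1]mulrC ![_ * c2]mulrC -!scalerA.
  rewrite big_split /= -!scaler_sumr -!expand ?h1 ?h2 //.
have := @poly_zero n.+2 V HV 1%N isT.
rewrite /V !cf1 // h1 h2 /= => H; apply: (etrans _ H).
under eq_bigr do rewrite scalerDl -!scalerA.
rewrite big_split /= -!scaler_sumr; congr (_ *: _ + _ *: _);
by apply: eq_bigr => i _; case: (A _); rewrite ?scale1r ?scale0r.
Qed.

Lemma colour (a b c d : nat) : a != b -> c != d ->
  exists gb : nat -> bool, [/\ gb a = false, gb b = true & gb c != gb d].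
Proof.
move=> ab cd.
pose gb := fun z => if z == a then false else if z == b then true
                    else if z == c then (d == a) else (c != b).
exists gb; split; first by rewrite /gb eqxx.
  by rewrite /gb eq_sym (negbTE ab) eqxx.
rewrite /gb eqxx [d == c]eq_sym (negbTE cd).
case E1: (c == a); case E2: (c == b); case E3: (d == a); case E4: (d == b) => //=;
move: E1 E2 E3 E4 ab cd => /eqP E1 /eqP E2 /eqP E3 /eqP E4 ab cd; subst;
by rewrite ?eqxx in ab cd *.
Qed.

Lemma part_iii (t : rtype) :
  (exists (a1 a2 : K) (u1 u2 : word),
        binomial_identity mul a1 a2 u1 u2 /\ of_rtype t u1 u2) ->
  exists (n : nat) (al : nat -> K),
       partial_linear_identity mul n al /\ plin_of_rtype t n al.
Proof.
move=> [a1 [a2 [u1 [u2 [[s1 s2 cond Hid] Ht]]]]].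
have ne : u1 != u2.
  apply/eqP => E; move: Ht; rewrite E; case: t => /=;
  by rewrite /first_letters_differ /last_letters_differ ?eqxx ?andbF.
move: cond; rewrite (negbTE ne) => cond.
have constcase : forall (c1 c2 : K) (w1 w2 : word) n, size w1 = n.+1 -> size w2 = n.+1 ->
    (forall f, c1 *: weval mul f w1 + c2 *: weval mul f w2 = 0) -> c1 + c2 != 0 ->
    exists (n : nat) (al : nat -> K),
       partial_linear_identity mul n al /\ plin_of_rtype t n al.
  move=> c1 c2 w1 w2 n h1 h2 H c12; exists n, (fun _ => c1 + c2); split.
    split; first by exists 0%N.
    move=> x y; have L := lin c1 c2 w1 w2 n (fun _ => true) h1 h2 H x y.
    by rewrite /= mulr1n !mulr1 in L.
  by case: t Ht => /=; rewrite ?c12.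
case Hp: (perm_eq u1 u2); last first.
  have [u [su H]] := zero_word _ _ _ _ cond s1 s2 Hid (negbT Hp).
  apply: (constcase 1 0 u u (size u).-1); rewrite ?prednK //; last by rewrite addr0 oner_neq0.
  by move=> f; rewrite H !scaler0 addr0.
set n := (size u1).-1.
have h1 : size u1 = n.+1 by rewrite prednK.
have h2 : size u2 = n.+1 by rewrite -(perm_size Hp).
case: (a1 + a2 =P 0) => [a0|/eqP a0]; last exact: (constcase a1 a2 u1 u2 n).
have a2E : a2 = - a1 by apply/eqP; rewrite -addr_eq0 addrC a0.
have a1n : a1 != 0 by move: cond; rewrite a2E oppr_eq0 orbb.
have a2n : a2 != 0 by rewrite a2E oppr_eq0.
have gen : forall A : nat -> bool,
    plin_of_rtype t n (fun i => a1 * (A (nth 0%N u1 i))%:R + a2 * (A (nth 0%N u2 i))%:R) ->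
    exists (n : nat) (al : nat -> K),
       partial_linear_identity mul n al /\ plin_of_rtype t n al.
  move=> A HA; eexists n, _; split; last exact: HA.
  split; last exact: lin.
  clear constcase; by case: t Ht HA => /= _; [move=> ?; exists 0%N | move=> ?; exists n | case/andP => ? _; exists 0%N].
have e0 : forall A : nat -> bool, A (nth 0%N u1 0) = A (head 0%N u1) /\ A (nth 0%N u2 0) = A (head 0%N u2).
  by move=> A; rewrite !nth0.
have en : forall A : nat -> bool, A (nth 0%N u1 n) = A (last 0%N u1) /\ A (nth 0%N u2 n) = A (last 0%N u2).
  by move=> A; rewrite -!nth_last h2.
clear constcase; case: t Ht gen => /= Ht gen.
- apply: (gen (fun z => z == head 0%N u1)) => /=.
  have [-> ->] := e0 (fun z => z == head 0%N u1).
  by move: Ht; rewrite /first_letters_differ eqxx eq_sym => /negbTE ->; rewrite mulr0 addr0 mulr1.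
- apply: (gen (fun z => z == last 0%N u1)) => /=.
  have [-> ->] := en (fun z => z == last 0%N u1).
  by move: Ht; rewrite /last_letters_differ eqxx eq_sym => /negbTE ->; rewrite mulr0 addr0 mulr1.
- move: Ht; rewrite /first_letters_differ /last_letters_differ => /andP [ab cd].
  have [gb [ga gb1 gcd]] := colour _ _ _ _ ab cd.
  apply: (gen (fun z => ~~ gb z)) => /=.
  have [-> ->] := e0 (fun z => ~~ gb z).
  have [-> ->] := en (fun z => ~~ gb z).
  rewrite ga gb1 /= mulr0 addr0 mulr1 a1n /=.
  by move: gcd; case: (gb _); case: (gb _) => //= _; rewrite ?mulr0 ?mulr1 ?addr0 ?add0r.
Qed.

End Main.

Theorem proposition2p1 (K : idomainType) (R : lmodType K) (mul : R -> R -> R)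
  (K_infinite : infinite_type K) (R_alg : is_assoc_algebra mul)
  (R_tf : torsion_free R) :
  (* (i) *)
  (forall (S : Type) (op : S -> S -> S), associative op ->
     forall t : rtype,
       (exists u v : word, sg_identity op u v /\ of_rtype t u v) ->
       exists u v : word, [/\ sg_identity op u v, of_rtype t u v &
                              all (fun i => (i < 2)%N) (u ++ v)]) /\
  (* (ii) *)
  ((exists (a1 a2 : K) (u1 u2 : word), binomial_identity mul a1 a2 u1 u2) ->
     bounded_nil mul \/ exists u v : word, sg_identity mul u v) /\
  (* (iii) *)
  (forall t : rtype,
     (exists (a1 a2 : K) (u1 u2 : word),
        binomial_identity mul a1 a2 u1 u2 /\ of_rtype t u1 u2) ->
     exists (n : nat) (al : nat -> K),
       partial_linear_identity mul n al /\ plin_of_rtype t n al) /\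
  (* (iv) *)
  (forall n : nat, (0 < n)%N -> (forall y : R, npow mul y n = 0) ->
     forall x y : R, ecomm mul (2 * n - 1) x y = 0).
Proof.
split; first by move=> S op _ t; exact: part_i.
split; first exact: part_ii.
split; first by move=> t; exact: part_iii.
exact: part_iv.
Qed.
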